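(* Let $N\ge 1$, $K\ge 2$, $M\in[0,N]$, and let $\mathbf p=(p_1,\dots,p_N)$ be a probability vector with $p_1\ge p_2\ge\dots\ge p_N$. For every caching scheme with uncoded placement (for any file size $F$) with cache size $M$, the average delivery rate $\bar R=\sum_{\mathbf d\in[N]^K}\big(\prod_{i=1}^K p_{d_i}\big)R(\mathbf d)$ satisfies $$\bar R\;\ge\;\min_{\mathbf a \text{ feasible}}\ \bar R_{\mathrm{lb}}(\mathbf a),$$ i.e. the optimal value of the optimization problem (P1): minimize $\bar R_{\mathrm{lb}}(\mathbf a)$ over all feasible placement vectors $\mathbf a$, is a lower bound on the average rate of every caching scheme with uncoded placement.
   Context: Notation: $[m]=\{1,\dots,m\}$; $\binom{m}{l}=0$ if $l>m$ or $m<0$. A demand vector $\mathbf d=(d_1,\dots,d_K)\in[N]^K$ (user $k$ requests file $d_k$) occurs with probability $\prod_{i=1}^K p_{d_i}$. For $\mathbf d$, let $\mathcal D(\mathbf d)\subseteq[N]$ be the set of distinct entries of $\mathbf d$. Placement vectors: a placement vector is $\mathbf a=(a_{n,l})_{n\in[N],\,0\le l\le K}$ of reals; it is feasible if (i) $a_{n,l}\ge 0$ for all $n,l$; (ii) $\sum_{l=0}^K\binom{K}{l}a_{n,l}=1$ for every $n\in[N]$; (iii) $\sum_{n=1}^N\sum_{l=1}^K\binom{K-1}{l-1}a_{n,l}\le M$. Lower-bound function: for nonempty $\mathcal D\subseteq[N]$, $R_{\mathrm{lb}}(\mathcal D;\mathbf a)=\max_{\pi}\sum_{l=0}^{K-1}\sum_{i=1}^{|\mathcal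 D|}\binom{K-i}{l}a_{\pi(i),l}$, the maximum over all bijections $\pi:[|\mathcal D|]\to\mathcal D$; and $\bar R_{\mathrm{lb}}(\mathbf a)=\sum_{\mathbf d\in[N]^K}\big(\prod_{i=1}^K p_{d_i}\big)R_{\mathrm{lb}}(\mathcal D(\mathbf d);\mathbf a)$. Caching scheme with uncoded placement: there are $N$ independent files $W_1,\dots,W_N$, each uniformly distributed on $\{0,1\}^F$, and $K$ users. In the placement phase (before demands are known) each user $k$ stores a cache content $Z_k$ consisting of a subset of the bits of the files (no coding), of total size at most $MF$ bits. In the delivery phase, for each demand vector $\mathbf d$ the server broadcasts a message $X_{\mathbf d}$ (a function of $W_1,\dots,W_N$) of $R(\mathbf d)F$ bits to all users, such that for every $k$, $W_{d_k}$ is a function of $(X_{\mathbf d},Z_k)$. *)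

(* Defs.v *)
From HB Require Import structures.
From mathcomp Require Import all_boot all_order all_algebra.
Set Implicit Arguments. Unset Strict Implicit. Unset Printing Implicit Defensive.
Import Order.TTheory GRing.Theory Num.Theory.
Local Open Scope ring_scope.

Section Caching.
Variables (R : realFieldType) (N K F : nat).

(* A realization of the library: bit (n, j) is bit j of file W_n. *)
Definition library := {ffun 'I_N * 'I_F -> bool}.
Definition demand := {ffun 'I_K -> 'I_N}.

Definition dprob (p : 'I_N -> R) (d : demand) : R := \prod_(i < K) p (d i).

Definition prob_vec (p : 'I_N -> R) : Prop :=
  (forall n, 0 <= p n) /\ \sum_(n < N) p n = 1.

Definition cache_content (Z : {set 'I_N * 'I_F}) (W : library) :
  {ffun 'I_N * 'I_F -> option bool} :=
  [ffun b => if b \in Z then Some (W b) else None].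

(* A caching scheme with uncoded placement and cache size M:
   Z k = set of bit positions stored by user k (at most M F bits);
   for demand d the server sends X d W, a string of L d bits (rate L d / F);
   every user k can decode W_{d_k} from (X d W, Z_k). *)
Definition uncoded_scheme (M : R) (Z : 'I_K -> {set 'I_N * 'I_F})
  (L : demand -> nat) (X : forall d : demand, library -> (L d).-tuple bool) : Prop :=
  (forall k, (#|Z k|%:R <= M * F%:R)) /\
  (forall (d : demand) (k : 'I_K),
     exists g : (L d).-tuple bool -> {ffun 'I_N * 'I_F -> option bool} -> {ffun 'I_F -> bool},
       forall W : library, g (X d W) (cache_content (Z k) W) = [ffun j => W (d k, j)]).

Definition avg_rate (p : 'I_N -> R) (L : demand -> nat) : R :=
  \sum_(d : demand) dprob p d * ((L d)%:R / F%:R).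

Definition feasible (M : R) (a : 'I_N -> 'I_K.+1 -> R) : Prop :=
  [/\ (forall n l, 0 <= a n l),
      (forall n, \sum_(l < K.+1) ('C(K, l))%:R * a n l = 1) &
      \sum_(n < N) \sum_(l < K.+1 | (1 <= l)%N) ('C(K.-1, l.-1))%:R * a n l <= M].

Definition dset (d : demand) : {set 'I_N} := [set d i | i : 'I_K].

(* sum_{l=0}^{K-1} sum_{i=1}^{|D|} C(K-i, l) a_{pi(i), l}  (index i below is 0-based). *)
Definition lb_term (D : {set 'I_N}) (a : 'I_N -> 'I_K.+1 -> R) (pi : 'I_#|D| -> 'I_N) : R :=
  \sum_(l < K.+1 | (l < K)%N) \sum_(i < #|D|) ('C(K - i.+1, l))%:R * a (pi i) l.

Definition bij_onto (D : {set 'I_N}) (pi : {ffun 'I_#|D| -> 'I_N}) : bool :=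
  [&& injectiveb pi, [forall i, pi i \in D] & [forall x in D, exists i, pi i == x]].

(* R_lb(D; a): maximum over all bijections pi : [|D|] -> D.  The fold is seeded with
   the value at the bijection i |-> enum_val i, which is itself in the range, so this is
   exactly the maximum. *)
Definition R_lb (D : {set 'I_N}) (a : 'I_N -> 'I_K.+1 -> R) : R :=
  \big[Num.max/@lb_term D a (fun i => enum_val (A := D) i)]_(pi : {ffun 'I_#|D| -> 'I_N} | @bij_onto D pi)
     @lb_term D a pi.

Definition avg_lb (p : 'I_N -> R) (a : 'I_N -> 'I_K.+1 -> R) : R :=
  \sum_(d : demand) dprob p d * R_lb (dset d) a.

End Caching.

(* Main.v *)
Require Import Defs.
From HB Require Import structures.
From mathcomp Require Import all_boot all_order all_algebra all_fingroup.
From mathcomp Require Import ring zify.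
Set Implicit Arguments. Unset Strict Implicit. Unset Printing Implicit Defensive.
Import Order.TTheory GRing.Theory Num.Theory.
Section Count.
Variable T : finType.

Lemma disj_im (s : {perm T}) (A B : {set T}) :
  [disjoint s @: A & B] = [disjoint A & s @^-1: B].
Proof.
rewrite !disjoints_subset; apply/subsetP/subsetP => H x.
- move=> xA; have := H (s x) (imset_f _ xA); by rewrite !inE.
- move=> /imsetP[y yA ->]; have := H y yA; by rewrite !inE.
Qed.

Definition hU (U S : {set T}) : nat :=
  \sum_(s : {perm T}) [disjoint s @: S & U].

Lemma hU_inv (U : {set T}) (t : {perm T}) (S : {set T}) : hU U (t @: S) = hU U S.
Proof.
rewrite /hU [RHS](reindex_inj (mulgI t)).
apply: eq_bigr => s _.
have -> // : s @: (t @: S) = (t * s)%g @: S.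
by rewrite -imset_comp; apply: eq_imset => x; rewrite /= permM.
Qed.

Lemma perm_inv_fun (h : {set T} -> nat) :
  (forall (t : {perm T}) (S : {set T}), h (t @: S) = h S) ->
  forall S S' : {set T}, #|S| = #|S'| -> h S = h S'.
Proof.
move=> Hh S S'; move Hn: #|S :\: S'| => n; elim: n S Hn => [|n IH] S Hn Hc.
  have sub : S \subset S' by rewrite -setD_eq0 -cards_eq0 Hn.
  have -> // : S = S' by apply/eqP; rewrite eqEcard sub Hc leqnn.
have : (0 < #|S :\: S'|)%N by rewrite Hn.
rewrite card_gt0 => /set0Pn [x xS].
have : (0 < #|S' :\: S|)%N by rewrite cardsD setIC -Hc -cardsD Hn.
rewrite card_gt0 => /set0Pn [y yS'].
move: (xS) (yS'); rewrite !inE => /andP[xnS' xinS] /andP[ynS yinS'].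
rewrite -(Hh (tperm x y) S).
have E : tperm x y @: S = tperm x y @^-1: S by rewrite -{1}tpermV im_permV.
apply: IH; last by rewrite card_imset; [exact: Hc | exact: perm_inj].
rewrite E.
have -> : (tperm x y @^-1: S) :\: S' = (S :\: S') :\ x.
  apply/setP=> z; rewrite !inE.
  case: tpermP => [Hz|Hz|zx zy]; rewrite ?Hz.
  - by rewrite eqxx (negbTE ynS) andbF.
  - by rewrite (negbTE ynS) !andbF yinS'.
  - by move/eqP/negbTE: zx => ->.
by move: Hn; rewrite (cardsD1 x) xS add1n => -[].
Qed.

Lemma card_perms : #|{perm T}| = #|T|`!.
Proof.
rewrite -cardsT -card_perm; apply: eq_card => s.
by rewrite !inE; apply/esym/subsetP => z; rewrite !inE.
Qed.

Lemma sum_bool_card (I : finType) (P Q : pred I) :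
  (\sum_(i | P i) (Q i : nat))%N = #|[set i | P i && Q i]|.
Proof.
rewrite -sum1dep_card big_mkcondr /=; apply: eq_bigr => i _.
by case: (Q i).
Qed.

Lemma count_h (U S : {set T}) :
  (hU U S * 'C(#|T|, #|S|) = #|T|`! * 'C(#|T| - #|U|, #|S|))%N.
Proof.
set l := #|S|.
have E1 : (\sum_(S' : {set T} | #|S'| == l) hU U S' = hU U S * 'C(#|T|, l))%N.
  rewrite (eq_bigr (fun _ => hU U S)); last first.
    by move=> S' /eqP HS'; apply: perm_inv_fun; [exact: hU_inv | rewrite HS'].
  by rewrite sum_nat_const -card_draws cardsE mulnC.
rewrite -E1 /hU exchange_big /=.
rewrite (eq_bigr (fun _ => 'C(#|T| - #|U|, l))); last first.
  move=> s _.
  rewrite (reindex_inj (imset_inj (@perm_inj _ s^-1%g))) /=.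
  have -> : (#|T| - #|U| = #|~: U|)%N by rewrite [#|~: U|]cardsCs setCK.
  rewrite sum_bool_card -cards_draws.
  apply: eq_card => A; rewrite !inE card_imset; last exact: perm_inj.
  rewrite -imset_comp (eq_imset _ (fun x => permKV s x)) imset_id.
  by rewrite disjoints_subset andbC.
by rewrite sum_nat_const card_perms.
Qed.

End Count.

Section Core.
Variables (N K F : nat).
Variable Z : 'I_K -> {set 'I_N * 'I_F}.

Definition Sb (b : 'I_N * 'I_F) : {set 'I_K} := [set k | b \in Z k].

Definition Wof (A : {set 'I_N * 'I_F}) : library N F := [ffun b => b \in A].

Lemma core (L : demand N K -> nat) (X : forall d : demand N K, library N F -> (L d).-tuple bool)
  (e : demand N K) (m : nat) (f : 'I_m -> 'I_N) (v : 'I_m -> 'I_K) :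
  (forall k : 'I_K,
     exists g : (L e).-tuple bool -> {ffun 'I_N * 'I_F -> option bool} -> {ffun 'I_F -> bool},
       forall W : library N F, g (X e W) (cache_content (Z k) W) = [ffun j => W (e k, j)]) ->
  injective f -> (forall i, e (v i) = f i) ->
  \sum_(i < m) #|[set j : 'I_F | [disjoint Sb (f i, j) & [set v i' | i' : 'I_m & i' <= i]]]|
    <= L e.
Proof.
move=> Hdec finj Hv.
set V := fun i : 'I_m => [set v i' | i' : 'I_m & i' <= i].
set P := [set ij : 'I_m * 'I_F | [disjoint Sb (f ij.1, ij.2) & V ij.1]].
set Bs := [set (f ij.1, ij.2) | ij in P].
have phi_inj : injective (fun ij : 'I_m * 'I_F => (f ij.1, ij.2)).
  by move=> [i j] [i' j'] /= [/finj -> ->].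
have -> : \sum_(i < m) #|[set j : 'I_F | [disjoint Sb (f i, j) & V i]]| = #|Bs|.
  transitivity (\sum_(i < m) \sum_(j : 'I_F) ([disjoint Sb (f i, j) & V i] : nat)).
    apply: eq_bigr => i _; rewrite -sum1dep_card big_mkcond /=.
    by apply: eq_bigr => j _; case: ifP.
  rewrite pair_big /= card_imset // -sum1dep_card big_mkcond /=.
  by rewrite [RHS]big_mkcond; apply: eq_bigr => ij _; case: ifP.
pose Psi (A : {set 'I_N * 'I_F}) := X e (Wof A).
have Psi_inj : {in powerset Bs &, injective Psi}.
  move=> A A'; rewrite !inE => sA sA' HX.
  have claim : forall n (i : 'I_m), i < n -> forall j, ((f i, j) \in A) = ((f i, j) \in A').
    elim=> [|n IH] i //; rewrite ltnS leq_eqVlt => /orP[/eqP Hi|]; last exact: IH.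
    move=> j.
    have [g Hg] := Hdec (v i).
    have Hcc : cache_content (Z (v i)) (Wof A) = cache_content (Z (v i)) (Wof A').
      apply/ffunP => b; rewrite !ffunE; case: ifP => bZ //; congr Some.
      case bB: (b \in Bs); last first.
        apply/idP/idP => H; [move: (subsetP sA b H) | move: (subsetP sA' b H)];
          by rewrite bB.
      case/imsetP: bB => [[i' j'] ijP Eb]; rewrite Eb /=; rewrite Eb in bZ.
      apply: IH; rewrite -Hi.
      move: ijP; rewrite inE /= disjoints_subset => /subsetP /(_ (v i)).
      rewrite !inE /=.
      move=> /(_ bZ) H; rewrite ltnNge; apply: contra H => H.
      by apply/imsetP; exists i; rewrite ?inE.
    have := Hg (Wof A); rewrite /Psi in HX; rewrite HX Hcc Hg => /ffunP /(_ j).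
    by rewrite !ffunE Hv.
  apply/setP => b.
  case bB: (b \in Bs); last first.
    apply/idP/idP => H; [move: (subsetP sA b H) | move: (subsetP sA' b H)];
      by rewrite bB.
  case/imsetP: bB => [[i j] _ ->] /=.
  exact: (claim i.+1).
have := max_card (mem (Psi @: powerset Bs)).
rewrite card_in_imset // card_powerset card_tuple card_bool.
by rewrite leq_exp2l.
Qed.

End Core.

Local Open Scope ring_scope.

Section RealPart.
Variable R : realFieldType.

Lemma sum_by_size (F K : nat) (s : 'I_F -> nat) (G : nat -> R) :
  (forall j, s j <= K)%N ->
  \sum_(l < K.+1) (#|[set j | s j == l]|)%:R * G l = \sum_j G (s j).
Proof.
move=> Hs.
transitivity (\sum_(l < K.+1) \sum_j (if s j == l then G l else 0)).
  apply: eq_bigr => l _; rewrite -big_mkcond /= sumr_const mulr_natl.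
  by congr (_ *+ _); apply: eq_card => j; rewrite inE.
rewrite exchange_big /=; apply: eq_bigr => j _.
rewrite (bigD1 (inord (s j))) //= inordK ?ltnS // eqxx big1 ?addr0 // => l Hl.
rewrite ifF //; apply/negbTE; apply: contra Hl => /eqP Hsl.
by apply/eqP/val_inj; rewrite /= inordK ?ltnS -?Hsl ?Hs.
Qed.


Section Feas.
Variables (N K F : nat) (Z : 'I_K -> {set 'I_N * 'I_F}).

Definition cnt (n : 'I_N) (l : nat) : nat := #|[set j : 'I_F | #|Sb Z (n, j)| == l]|.

Definition a_of (n : 'I_N) (l : 'I_K.+1) : R :=
  (cnt n l)%:R / (F%:R * ('C(K, l))%:R).

Lemma Sb_le (b : 'I_N * 'I_F) : (#|Sb Z b| <= K)%N.
Proof. by have := max_card (mem (Sb Z b)); rewrite card_ord. Qed.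

Lemma binK_neq0 (l : nat) : (l <= K)%N -> ('C(K, l))%:R != 0 :> R.
Proof. by move=> H; rewrite pnatr_eq0 -lt0n bin_gt0. Qed.

Lemma feas (M : R) : (0 < K)%N -> (0 < F)%N ->
  (forall k, (#|Z k|%:R <= M * F%:R)) -> feasible M a_of.
Proof.
move=> K0 F0 HZ.
have Fn0 : F%:R != 0 :> R by rewrite pnatr_eq0 -lt0n.
have Kn0 : K%:R != 0 :> R by rewrite pnatr_eq0 -lt0n.
split.
- move=> n l; rewrite /a_of divr_ge0 // mulr_ge0 //.
- move=> n.
  rewrite (eq_bigr (fun l : 'I_K.+1 => (cnt n l)%:R * (('C(K, l))%:R / (F%:R * ('C(K, l))%:R)))); last first.
    by move=> l _; rewrite /a_of mulrCA mulrA.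
  have SBS := @sum_by_size F K (fun j => #|Sb Z (n, j)|); rewrite /= in SBS.
  rewrite /cnt (SBS (fun l => ('C(K, l))%:R / (F%:R * ('C(K, l))%:R))); last by move=> j; exact: Sb_le.
  rewrite (eq_bigr (fun _ => F%:R^-1)); last first.
    move=> j _; rewrite invfM mulrCA mulfV ?mulr1 //; exact: binK_neq0 (Sb_le _).
  by rewrite sumr_const card_ord -[LHS]mulr_natr mulVf.
- have E1 : forall n : 'I_N,
    \sum_(l < K.+1 | (1 <= l)%N) ('C(K.-1, l.-1))%:R * a_of n l =
    \sum_j (#|Sb Z (n, j)|)%:R / (K%:R * F%:R).
    move=> n; rewrite big_mkcond /=.
    rewrite (eq_bigr (fun l : 'I_K.+1 => (cnt n l)%:R * ((l : nat)%:R / (K%:R * F%:R)))); last first.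
      move=> l _; case: ifP => Hl.
        have Cn0 := binK_neq0 (ltnSE (ltn_ord l)).
        have E : ('C(K.-1, l.-1))%:R = (l : nat)%:R * ('C(K, l))%:R / K%:R :> R.
          apply: (mulfI Kn0); rewrite [RHS]mulrC divfK //.
          by rewrite -!natrM mul_bin_diag prednK.
        rewrite /a_of E; field; rewrite Cn0 Kn0 Fn0 //.
      by move: Hl; case: (nat_of_ord l) => // _; rewrite mul0r mulr0.
    have SBS := @sum_by_size F K (fun j => #|Sb Z (n, j)|); rewrite /= in SBS.
    by rewrite /cnt (SBS (fun l => l%:R / (K%:R * F%:R))) //; move=> j; exact: Sb_le.
  rewrite (eq_bigr _ (fun n _ => E1 n)) pair_big /= -mulr_suml -natr_sum.
  have E2 : (\sum_(b : 'I_N * 'I_F) #|Sb Z b| = \sum_k #|Z k|)%N.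
    transitivity (\sum_(b : 'I_N * 'I_F) \sum_(k : 'I_K) (b \in Z k : nat))%N.
      by apply: eq_bigr => b _; rewrite sum_bool_card; apply: eq_card => k; rewrite !inE.
    rewrite exchange_big /=; apply: eq_bigr => k _.
    by rewrite sum_bool_card; apply: eq_card => b; rewrite !inE.
  rewrite (eq_bigr (fun b => #|Sb Z b|)); last by case.
  rewrite E2 ler_pdivrMr ?mulr_gt0 ?ltr0n // natr_sum.
  apply: (le_trans (ler_sum _ (fun k _ => HZ k))).
  by rewrite sumr_const card_ord -(mulr_natr (M * F%:R) K) [K%:R * _]mulrC mulrA.
Qed.

End Feas.


Lemma card_le_ord (m : nat) (i : 'I_m) :
  #|[pred i' : 'I_m | (i' <= i)%N]| = i.+1.
Proof.
have H := @big_ord_widen_cond nat 0%N addn i.+1 m xpredT (fun _ => 1%N) (ltn_ord i).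
rewrite /= sum1_card card_ord in H.
rewrite -sum1_card H; apply: eq_bigl => i'; by rewrite /= ltnS.
Qed.

Section LB.
Variables (N K F : nat) (Z : 'I_K -> {set 'I_N * 'I_F}) (L : demand N K -> nat)
  (X : forall d : demand N K, library N F -> (L d).-tuple bool).

Definition perm_dem (d : demand N K) (s : {perm 'I_K}) : demand N K :=
  [ffun k => d (s k)].

Definition Avg (d : demand N K) : R :=
  (\sum_(s : {perm 'I_K}) (L (perm_dem d s))%:R) / ((K`!)%:R * F%:R).


Hypothesis Hdec : forall (d : demand N K) (k : 'I_K),
  exists g : (L d).-tuple bool -> {ffun 'I_N * 'I_F -> option bool} -> {ffun 'I_F -> bool},
    forall W : library N F, g (X d W) (cache_content (Z k) W) = [ffun j => W (d k, j)].

Lemma lb_pi (K0 : (0 < K)%N) (F0 : (0 < F)%N) (d : demand N K)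
  (pi : 'I_#|dset d| -> 'I_N) :
  injective pi -> (forall i, pi i \in dset d) -> lb_term (a_of Z) pi <= Avg d.
Proof.
move=> pi_inj pi_in.
have Fn0 : F%:R != 0 :> R by rewrite pnatr_eq0 -lt0n.
have [u Hu] : exists u : 'I_#|dset d| -> 'I_K, forall i, d (u i) = pi i.
  have H : forall i, exists k : 'I_K, d k = pi i.
    by move=> i; have := pi_in i; rewrite /dset => /imsetP[k _ ->]; exists k.
  by have [u Hu] := fin_all_exists H; exists u.
have u_inj : injective u by move=> i i' E; apply: pi_inj; rewrite -!Hu E.
pose U (i : 'I_#|dset d|) := [set u i' | i' : 'I_#|dset d| & (i' <= i)%N].
have cardU : forall i, #|U i| = i.+1.
  by move=> i; rewrite card_imset // cardsE card_le_ord.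
pose S i j := Sb Z (pi i, j).
have step1 : forall s : {perm 'I_K},
  (\sum_i #|[set j : 'I_F | [disjoint s @: S i j & U i]]| <= L (perm_dem d s))%N.
  move=> s.
  have Hv : forall i, perm_dem d s ((s^-1)%g (u i)) = pi i.
    by move=> i; rewrite ffunE permKV Hu.
  have := @core N K F Z L X (perm_dem d s) _ pi (fun i => (s^-1)%g (u i)) (Hdec _) pi_inj Hv.
  apply: leq_trans; apply: eq_leq; apply: eq_bigr => i _; apply: eq_card => j.
  have E : s @^-1: U i = [set (s^-1)%g (u i') | i' : 'I_#|dset d| & (i' <= i)%N].
    by rewrite -im_permV -imset_comp.
  by rewrite !inE disj_im E.
have step2 : (\sum_i \sum_j hU (U i) (S i j) <= \sum_s L (perm_dem d s))%N.
  apply: (leq_trans _ (@leq_sum _ _ _ _ _ (fun s _ => step1 s))).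
  rewrite [leqRHS]exchange_big /=; apply: eq_leq; apply: eq_bigr => i _.
  rewrite /hU exchange_big /=; apply: eq_bigr => s _.
  by rewrite sum_bool_card; apply: eq_card => j; rewrite !inE.
have step3 : forall i j, (hU (U i) (S i j))%:R
    = (K`!)%:R * ('C(K - i.+1, #|S i j|))%:R / ('C(K, #|S i j|))%:R :> R.
  move=> i j; have := count_h (U i) (S i j); rewrite card_ord cardU => E.
  apply: (mulIf (binK_neq0 (Sb_le Z (pi i, j)))); rewrite divfK.
    by rewrite -!natrM E.
  exact: (binK_neq0 (Sb_le Z (pi i, j))).
have step4 : lb_term (a_of Z) pi = \sum_(i : 'I_#|dset d|) \sum_(j : 'I_F)
    ('C(K - i.+1, #|S i j|))%:R / (F%:R * ('C(K, #|S i j|))%:R).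
  rewrite /lb_term big_mkcond /=.
  rewrite (eq_bigr (fun l : 'I_K.+1 => \sum_(i : 'I_#|dset d|) ('C(K - i.+1, l))%:R * a_of Z (pi i) l)); last first.
    move=> l _; case: ifP => // /negbT; rewrite -leqNgt => HKl; rewrite big1 // => i _.
    by rewrite bin_small ?mul0r //; lia.
  rewrite exchange_big /=; apply: eq_bigr => i _.
  have SBS := @sum_by_size F K (fun j => #|S i j|); rewrite /= in SBS.
  rewrite -(SBS (fun l => ('C(K - i.+1, l))%:R / (F%:R * ('C(K, l))%:R))); last first.
    by move=> j; exact: Sb_le.
  by apply: eq_bigr => l _; rewrite /a_of /cnt mulrCA.
rewrite step4 /Avg ler_pdivlMr ?mulr_gt0 ?ltr0n ?fact_gt0 //.
have E5 : (\sum_(i : 'I_#|dset d|) \sum_(j : 'I_F) ('C(K - i.+1, #|S i j|))%:R / (F%:R * ('C(K, #|S i j|))%:R))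
     * ((K`!)%:R * F%:R) = (\sum_i \sum_j hU (U i) (S i j) : nat)%:R :> R.
  rewrite natr_sum mulr_suml; apply: eq_bigr => i _.
  rewrite natr_sum mulr_suml; apply: eq_bigr => j _.
  rewrite step3; field.
  by rewrite Fn0 (binK_neq0 (Sb_le Z (pi i, j))).
by rewrite E5 -natr_sum ler_nat.
Qed.


Lemma R_lb_le (K0 : (0 < K)%N) (F0 : (0 < F)%N) (d : demand N K) :
  R_lb (dset d) (a_of Z) <= Avg d.
Proof.
rewrite /R_lb; apply: (big_ind (fun x => x <= Avg d)).
- apply: lb_pi => //; [exact: enum_val_inj | move=> i; exact: enum_valP].
- by move=> x y Hx Hy; rewrite ge_max Hx Hy.
- by move=> pi /and3P[/injectiveP pinj /forallP pin _]; apply: lb_pi.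
Qed.

End LB.

Lemma sym_avg (N K F : nat) (L : demand N K -> nat) (p : 'I_N -> R) :
  (0 < F)%N ->
  \sum_(d : demand N K) dprob p d * Avg F L d = avg_rate F p L.
Proof.
move=> F0.
have Fn0 : F%:R != 0 :> R by rewrite pnatr_eq0 -lt0n.
have Kn0 : (K`!)%:R != 0 :> R by rewrite pnatr_eq0 -lt0n fact_gt0.
have H : forall s : {perm 'I_K},
    \sum_(d : demand N K) dprob p d * (L (perm_dem d s))%:R
    = \sum_(d : demand N K) dprob p d * (L d)%:R.
  move=> s.
  have hinj : injective (fun d : demand N K => perm_dem d s).
    move=> d d' /ffunP E; apply/ffunP => k; have := E ((s^-1)%g k).
    by rewrite !ffunE permKV.
  rewrite [RHS](reindex_inj hinj); apply: eq_bigr => d _; congr (_ * _).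
  rewrite /dprob [LHS](reindex_inj (@perm_inj _ s)); apply: eq_bigr => i _.
  by rewrite ffunE.
rewrite /Avg /avg_rate.
transitivity ((\sum_(s : {perm 'I_K}) \sum_(d : demand N K) dprob p d * (L (perm_dem d s))%:R)
   / ((K`!)%:R * F%:R)).
  rewrite [in RHS]exchange_big /= [RHS]mulr_suml; apply: eq_bigr => d _.
  by rewrite mulrA mulr_sumr.
rewrite (eq_bigr _ (fun s _ => H s)) sumr_const card_perms card_ord.
rewrite -(mulr_natr (\sum_d _) K`!) mulr_suml mulr_suml; apply: eq_bigr => d _.
field; by rewrite Kn0 Fn0.
Qed.

End RealPart.

Unset Implicit Arguments.
Local Open Scope ring_scope.

Theorem lemma1 (R : realFieldType) (N K F : nat) (M : R) (p : 'I_N -> R)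
  (Z : 'I_K -> {set 'I_N * 'I_F}) (L : demand N K -> nat)
  (X : forall d : demand N K, library N F -> (L d).-tuple bool) :
  (1 <= N)%N -> (2 <= K)%N -> (0 < F)%N ->
  0 <= M -> M <= N%:R ->
  prob_vec p -> (forall i j : 'I_N, (i <= j)%N -> p j <= p i) ->
  uncoded_scheme M Z X ->
  exists a : 'I_N -> 'I_K.+1 -> R,
    feasible M a /\ avg_lb p a <= avg_rate F p L.
Proof.
move=> N1 K2 F0 M0 MN [p0 p1] _ [HZ Hdec].
have K0 : (0 < K)%N by apply: leq_trans K2.
exists (a_of R Z); split; first exact: feas.
rewrite /avg_lb -(sym_avg L p F0); apply: ler_sum => d _; apply: ler_wpM2l.
  by apply: prodr_ge0 => i _; exact: p0.
exact: (R_lb_le R Hdec K0 F0 d).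
Qed.
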